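(* Let $n\geq 3$ and consider the $n$-cycle scenario. A nondisturbing behavior $\{p_1,\dots,p_n\}$ for this scenario is logically contextual if and only if there exist an index $1\leq i\leq n$, a pair $(a,b)\in\{0,1\}^2$ and $(\alpha_1,\dots,\alpha_{n-2})\in\{0,1\}^{n-2}$ such that $p_i(a,b)>0$, $p_{i+1}(b,\alpha_1)=0$, $p_{i+j}(\lnot\alpha_{j-1},\alpha_j)=0$ for all $2\leq j\leq n-2$, and $p_{i+n-1}(\lnot\alpha_{n-2},a)=0$, where indices of $p$ are taken modulo $n$ (with values in $\{1,\dots,n\}$) and $\lnot x=1-x$.
   Context: The $n$-cycle scenario has measurements $M_1,\dots,M_n$, each with outcome set $O=\{0,1\}$, and contexts $C_i=\{M_i,M_{i+1}\}$, $i=1,\dots,n$, indices modulo $n$ (so $M_{n+1}=M_1$). A behavior is a family of probability distributions $p_i$ on $\{0,1\}^2$, where $p_i(x,y)$ is the probability that $M_i=x$ and $M_{i+1}=y$. It is nondisturbing if marginals agree on shared measurements: for every $i$ and $x\in\{0,1\}$, $\sum_y p_i(y,x)=\sum_y p_{i+1}(x,y)$. Let $\bar p_i(x,y)=1$ if $p_i(x,y)>0$ and $0$ otherwise. The behavior is logically noncontextual if there exists $\bar p:\{0,1\}^n\to\{0,1\}$ such that for every $i$ and $(x,y)$, $\max\{\bar p(t): t\in\{0,1\}^n,\ t_i=x,\ t_{i+1}=y\}=\bar p_i(x,y)$; otherwise it is logically contextual. *)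

(* Defs.v *)
From HB Require Import structures.
From mathcomp Require Import all_boot all_order all_algebra.
Set Implicit Arguments. Unset Strict Implicit. Unset Printing Implicit Defensive.
Import Order.TTheory GRing.Theory Num.Theory.
Local Open Scope ring_scope.

(* Measurements M_1..M_n are indexed by 'I_n (0-based); outcomes {0,1} = bool.
   A behavior p assigns to context i = {M_i, M_(i+1)} the function
   p i x y = probability that M_i = x and M_(i+1) = y. *)

Definition cshift (n : nat) (i : 'I_n) (k : nat) : 'I_n :=
  Ordinal (ltn_pmod (i + k)%N (leq_ltn_trans (leq0n i) (ltn_ord i))).

Definition behavior (R : realFieldType) (n : nat) := 'I_n -> bool -> bool -> R.

Definition is_distribution (R : realFieldType) (n : nat) (p : behavior R n) : Prop :=
  forall i : 'I_n,
    (forall x y, 0 <= p i x y) /\ \sum_(x : bool) \sum_(y : bool) p i x y = 1.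

Definition nondisturbing (R : realFieldType) (n : nat) (p : behavior R n) : Prop :=
  forall (i : 'I_n) (x : bool),
    \sum_(y : bool) p i y x = \sum_(y : bool) p (cshift i 1) x y.

Definition pbar (R : realFieldType) (n : nat) (p : behavior R n) (i : 'I_n) (x y : bool) : bool :=
  0 < p i x y.

Definition logically_noncontextual (R : realFieldType) (n : nat) (p : behavior R n) : Prop :=
  exists g : {ffun 'I_n -> bool} -> bool,
    forall (i : 'I_n) (x y : bool),
      [exists t : {ffun 'I_n -> bool},
          [&& t i == x, t (cshift i 1) == y & g t]] = pbar p i x y.

Definition logically_contextual (R : realFieldType) (n : nat) (p : behavior R n) : Prop :=
  ~ logically_noncontextual p.

(* Main.v *)
Require Import Defs.
From HB Require Import structures.
From mathcomp Require Import all_boot all_order all_algebra.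
From mathcomp Require Import zify lra.
From Stdlib Require Import Classical.
Import Order.TTheory GRing.Theory Num.Theory.
Local Open Scope ring_scope.

Section Comb.
Variables (E : nat -> bool -> bool -> bool) (N : nat) (a b : bool).

Fixpoint sf (k : nat) : bool :=
  match k with
  | 0 => a
  | 1 => b
  | S (S _ as k1) => if E k1 (sf k1) false then false else true
  end.

Fixpoint rf (d : nat) : bool :=
  match d with
  | 0 => a
  | S d' => if E (N - d) false (rf d') then false else true
  end.

Lemma path_lemma :
  (3 <= N)%N ->
  (forall m x y, E m x y -> exists z, E m.+1 y z) ->
  (forall m y z, E m.+1 y z -> exists x, E m x y) ->
  E 0 a b -> E N a b ->
  (forall alpha : nat -> bool, ~ [/\ E 1 b (alpha 1%N) = false,
      (forall j, (2 <= j <= N - 2)%N -> E j (~~ alpha j.-1) (alpha j) = false)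
    & E (N - 1) (~~ alpha (N - 2)%N) a = false]) ->
  exists u : nat -> bool, [/\ u 0%N = a, u 1%N = b, u N = a &
     forall m, (m < N)%N -> E m (u m) (u m.+1)].
Proof.
move=> HN HF HB E0 EN Hno.
have sE : forall k, E k (sf k) (sf k.+1).
  elim=> [//|k IH].
  have [z Hz] := HF _ _ _ IH.
  rewrite [sf k.+2]/=.
  case Ek: (E k.+1 (sf k.+1) false) => //.
  by case: z Hz; rewrite ?Ek.
have rE : forall d, (d < N)%N -> E (N - d.+1) (rf d.+1) (rf d).
  elim=> [_|d IH Hd].
    have e : N = (N - 1).+1 by lia.
    rewrite e in EN; have [x Hx] := HB _ _ _ EN.
    rewrite [rf 1]/=.
    case Ek: (E (N - 1) false a) => //.
    by case: x Hx; rewrite ?Ek.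
  have := IH (ltnW Hd).
  have -> : (N - d.+1 = (N - d.+2).+1)%N by lia.
  move=> Hx; have [x Hx'] := HB _ _ _ Hx.
  rewrite [rf d.+2]/=.
  case Ek: (E (N - d.+2) false (rf d.+1)) => //.
  by case: x Hx'; rewrite ?Ek.
pose r k := rf (N - k).
have rE' : forall m, (m < N)%N -> E m (r m) (r m.+1).
  move=> m Hm; rewrite /r.
  have := rE (N - m.+1)%N ltac:(lia).
  have -> : (N - (N - m.+1).+1 = m)%N by lia.
  by have -> : ((N - m.+1).+1 = N - m)%N by lia.
case c: [exists j : 'I_N, (1 <= j <= N - 2)%N && E j (sf j) (~~ sf j.+1)].
  case/existsP: c => [[j Hj]] /= /andP [/andP [Hj1 Hj2] Ej].
  exists (fun k => if (k <= j)%N then sf k else r k); split.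
  - by [].
  - by rewrite Hj1.
  - have -> : (N <= j)%N = false by lia.
    by rewrite /r subnn.
  move=> m Hm.
  case: (ltngtP m j) => Hmj.
  - exact: sE.
  - exact: rE'.
  - subst m.
    case e: (r j.+1 == sf j.+1); first by rewrite (eqP e).
    by have -> : r j.+1 = ~~ sf j.+1 by case: (r j.+1) (sf j.+1) e => [] [].
have cF : forall j, (1 <= j <= N - 2)%N -> E j (sf j) (~~ sf j.+1) = false.
  move=> j Hj; have Hjn : (j < N)%N by lia.
  move/negbT/existsPn: c => /(_ (Ordinal Hjn)) /=.
  by rewrite Hj /= => /negbTE.
case d: (E (N - 1) (sf (N - 1)) a).
  exists (fun k => if k == N then a else sf k); split.
  - by have -> : (0 == N) = false by lia.
  - by have -> : (1 == N) = false by lia.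
  - by rewrite eqxx.
  move=> m Hm.
  have -> : (m == N) = false by lia.
  case e: (m.+1 == N); last exact: sE.
  by have -> : m = (N - 1)%N by lia.
exfalso; apply: (Hno (fun k => ~~ sf k.+1)); split.
- by have := cF 1%N ltac:(lia).
- move=> j Hj; rewrite negbK.
  have -> : j.-1.+1 = j by lia.
  apply: cF; lia.
- rewrite negbK.
  by have -> : (N - 2).+1 = (N - 1)%N by lia.
Qed.
End Comb.

Lemma cshift_val (n : nat) (i : 'I_n) (k : nat) : val (cshift i k) = ((i + k) %% n)%N.
Proof. by []. Qed.

Lemma cshiftS (n : nat) (i : 'I_n) (m : nat) : cshift (cshift i m) 1 = cshift i m.+1.
Proof. by apply: val_inj; rewrite !cshift_val modnDml addn1 addnS. Qed.

Lemma cshiftN (n : nat) (i : 'I_n) : cshift i n = i.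
Proof. by apply: val_inj; rewrite cshift_val modnDr modn_small. Qed.

Lemma cshift_back (n : nat) (i k : 'I_n) : cshift i ((k + (n - i)) %% n) = k.
Proof.
apply: val_inj; rewrite cshift_val modnDmr.
have -> : (i + (k + (n - i)) = k + n)%N by have := ltn_ord i; lia.
by rewrite modnDr modn_small.
Qed.

Theorem theorem2 (R : realFieldType) (n : nat) (p : behavior R n) :
  (3 <= n)%N -> is_distribution p -> nondisturbing p ->
  (logically_contextual p <->
   exists (i : 'I_n) (a b : bool) (alpha : nat -> bool),
     [/\ 0 < p i a b,
         p (cshift i 1) b (alpha 1%N) = 0,
         (forall j : nat, (2 <= j <= n - 2)%N ->
            p (cshift i j) (~~ alpha j.-1) (alpha j) = 0)
       & p (cshift i (n - 1)) (~~ alpha (n - 2)%N) a = 0]).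
Proof.
move=> Hn Hd Hnd.
have p0 : forall k x y, 0 <= p k x y by move=> k x y; case: (Hd k) => H _; exact: H.
have pz : forall k x y, ~~ (0 < p k x y) -> p k x y = 0.
  move=> k x y H; apply/eqP; rewrite eq_le p0 andbT; by rewrite leNgt.
split; last first.
  move=> [i [a [b [alpha [H0 H1 H2 H3]]]]] [g Hg].
  have : pbar p i a b by [].
  rewrite -Hg => /existsP [t /and3P [/eqP ta /eqP tb gt]].
  have edge : forall k, 0 < p k (t k) (t (cshift k 1)).
    move=> k; have := Hg k (t k) (t (cshift k 1)); rewrite /pbar => <-.
    by apply/existsP; exists t; rewrite !eqxx gt.
  pose v m := t (cshift i m).
  have ve : forall m, 0 < p (cshift i m) (v m) (v m.+1).
    by move=> m; rewrite /v -cshiftS; apply: edge.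
  have neq : forall k x y z, 0 < p k x y -> p k x z = 0 -> y = ~~ z.
    move=> k x y z Hp Hz; case: (y =P z) => [e|/eqP e].
      by subst; rewrite Hz ltxx in Hp.
    by move: e {Hp Hz}; case: y; case: z.
  have key : forall j, (1 <= j <= n - 2)%N -> v j.+1 = ~~ alpha j.
    elim=> [//|j IH Hj].
    case: (posnP j) => [->|jp].
      apply: (neq _ b _ _ _ H1).
      by have := ve 1%N; rewrite /v tb.
    have Hv := IH ltac:(lia).
    have := H2 j.+1 ltac:(lia); rewrite /= -Hv => Hz.
    exact: (neq _ _ _ _ (ve j.+1) Hz).
  have Hl := key (n - 2)%N ltac:(lia).
  have := ve (n - 1)%N.
  have -> : (n - 1).+1 = n by lia.
  have -> : (n - 1 = (n - 2).+1)%N by lia.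
  rewrite Hl /v cshiftN ta.
  have -> : ((n - 2).+1 = n - 1)%N by lia.
  by rewrite H3 ltxx.
move=> Hc.
apply: NNPP => Hno; apply: Hc.
exists (fun t => [forall k, pbar p k (t k) (t (cshift k 1))]).
move=> i x y; apply/idP/idP.
  by case/existsP => t /and3P [/eqP <- /eqP <- /forallP /(_ i)].
move=> Hxy.
pose E m v w := pbar p (cshift i m) v w.
have [u [u0 u1 uN ue]] : exists u : nat -> bool, [/\ u 0%N = x, u 1%N = y, u n = x &
     forall m, (m < n)%N -> E m (u m) (u m.+1)].
  apply: path_lemma => //.
  - move=> m v w; rewrite /E /pbar => Hp.
    have := Hnd (cshift i m) w; rewrite cshiftS !big_bool /=.
    move=> e.
    case h1: (0 < p (cshift i m.+1) w true); first by exists true.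
    case h2: (0 < p (cshift i m.+1) w false); first by exists false.
    exfalso.
    have := pz _ _ _ (negbT h1); have := pz _ _ _ (negbT h2) => z1 z2.
    rewrite z1 z2 addr0 in e.
    have : 0 < p (cshift i m) true w + p (cshift i m) false w.
      by have := p0 (cshift i m) true w; have := p0 (cshift i m) false w; case: v Hp => Hp; lra.
    by rewrite e ltxx.
  - move=> m w z; rewrite /E /pbar => Hp.
    have := Hnd (cshift i m) w; rewrite cshiftS !big_bool /=.
    move=> e.
    case h1: (0 < p (cshift i m) true w); first by exists true.
    case h2: (0 < p (cshift i m) false w); first by exists false.
    exfalso.
    have := pz _ _ _ (negbT h1); have := pz _ _ _ (negbT h2) => z1 z2.
    rewrite z1 z2 addr0 in e.
    have : 0 < p (cshift i m.+1) w true + p (cshift i m.+1) w false.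
      by have := p0 (cshift i m.+1) w true; have := p0 (cshift i m.+1) w false; case: z Hp => Hp; lra.
    by rewrite -e ltxx.
  - by rewrite /E /pbar (_ : cshift i 0 = i) //; apply: val_inj; rewrite cshift_val addn0 modn_small.
  - by rewrite /E cshiftN.
  - move=> alpha [h1 h2 h3]; apply: Hno.
    exists i, x, y, alpha; split => //.
    + by apply: pz; rewrite -/(pbar _ _ _ _) -/(E _ _ _) h1.
    + by move=> j Hj; apply: pz; rewrite -/(pbar _ _ _ _) -/(E _ _ _) h2.
    + by apply: pz; rewrite -/(pbar _ _ _ _) -/(E _ _ _) h3.
apply/existsP; exists [ffun k : 'I_n => u ((k + (n - i)) %% n)%N].
have Hi := ltn_ord i.
apply/and3P; split.
- rewrite ffunE; have -> : (i + (n - i) = n)%N by lia.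
  by rewrite modnn u0.
- rewrite ffunE cshift_val modnDml.
  have -> : (i + 1 + (n - i) = 1 + n)%N by lia.
  by rewrite modnDr modn_small ?u1 //; lia.
apply/forallP => k; rewrite !ffunE.
set m := ((k + (n - i)) %% n)%N.
have Hm : (m < n)%N by rewrite ltn_mod; lia.
have -> : (((cshift k 1) + (n - i)) %% n = m.+1 %% n)%N.
  by rewrite cshift_val modnDml /m -[X in _ = (X %% n)%N]addn1 modnDml; apply: (congr1 (modn^~ n)); lia.
have -> : u (m.+1 %% n)%N = u m.+1.
  case: (ltngtP m.+1 n) => h; first by rewrite modn_small.
  - lia.
  - by rewrite h modnn u0 uN.
have := ue m Hm; rewrite /E.
by rewrite /m cshift_back.
Qed.
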